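(* Let $T\subseteq S_k$, let $p\geq 1$, and let $n\geq k+p+1$. Then $S_n(\nu^p(T))=S_n(T)$.
   Context: Two sequences are order-isomorphic if they have the same length $m$ and for all $i<j$, $x_i<x_j$ iff $y_i<y_j$. A permutation $\sigma\in S_n$ contains $\pi\in S_m$ if some subsequence $(\sigma_{i_1},\dots,\sigma_{i_m})$, $i_1<\dots<i_m$, is order-isomorphic to $\pi$; otherwise it avoids $\pi$. For a set $A$ of permutations, $S_n(A)$ is the set of permutations in $S_n$ avoiding every element of $A$. For $\tau\in S_k$ and $m\ge k$, $V_\tau^m$ is the set of all $\alpha\in S_m$ that contain $\tau$. For $T\subseteq S_k$ (any $k$), $\nu(T)=\bigcup_{\tau\in T}V_\tau^{k+1}\subseteq S_{k+1}$; $\nu^1=\nu$ and $\nu^p(T)=\nu(\nu^{p-1}(T))\subseteq S_{k+p}$ for $p>1$. *)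

(* Defs.v *)
From mathcomp Require Import all_boot all_fingroup.
Set Implicit Arguments. Unset Strict Implicit. Unset Printing Implicit Defensive.

(* Permutations of {0,...,n-1} are elements of 'S_n = {perm 'I_n}; the
   one-line notation of s is (s 0, ..., s (n-1)). *)

Definition order_iso (m : nat) (x y : 'I_m -> nat) : bool :=
  [forall i : 'I_m, forall j : 'I_m, (i < j) ==> ((x i < x j) == (y i < y j))].

Definition contains (n m : nat) (sigma : 'S_n) (pi : 'S_m) : bool :=
  [exists f : {ffun 'I_m -> 'I_n},
     [forall i : 'I_m, forall j : 'I_m, (i < j) ==> (f i < f j)] &&
     order_iso (fun i => nat_of_ord (sigma (f i))) (fun i => nat_of_ord (pi i))].

Definition Savoid (n k : nat) (A : {set 'S_k}) : {set 'S_n} :=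
  [set sigma : 'S_n | [forall tau in A, ~~ contains sigma tau]].

Definition Vset (k : nat) (tau : 'S_k) (m : nat) : {set 'S_m} :=
  [set alpha : 'S_m | contains alpha tau].

Definition nu (k : nat) (T : {set 'S_k}) : {set 'S_k.+1} :=
  \bigcup_(tau in T) Vset tau k.+1.

Fixpoint nu_iter (k p : nat) (T : {set 'S_k}) : {set 'S_(p + k)} :=
  match p return {set 'S_(p + k)} with
  | 0 => T
  | p'.+1 => nu (nu_iter p' T)
  end.

(* Main.v *)
Require Import Defs.
From mathcomp Require Import all_boot all_fingroup zify.
Set Implicit Arguments. Unset Strict Implicit. Unset Printing Implicit Defensive.


Definition incr m n (f : 'I_m -> 'I_n) := forall i j : 'I_m, i < j -> f i < f j.

Lemma ext1 m n (g : 'I_m -> 'I_n) : incr g -> m < n ->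
  exists (f : 'I_m.+1 -> 'I_n) (h : 'I_m -> 'I_m.+1), incr f /\ forall i, f (h i) = g i.
Proof.
case: n g => [|n] g ginc; first by [].
case: m g ginc => [|m] g ginc mn.
  exists (fun _ => ord0), (fun _ => ord0); split; last by case.
  by move=> [[|a] ?] [[|b] ?].
pose G i := val (g (inord i)).
have Gv (o : 'I_m.+1) : G o = g o by rewrite /G inord_val.
have Ginc i j : i < j -> j < m.+1 -> G i < G j.
  move=> ij jm; rewrite /G; apply: ginc; rewrite !inordK //; lia.
have Glt i : G i < n.+1 by rewrite /G ltn_ord.
have Gge i : i < m.+1 -> i <= G i.
  elim: i => [|i IH] im //; have := Ginc i i.+1 (ltnSn i) im.
  have := IH (ltnW im); lia.
have [j Pj jmin] := ex_minnP (ex_intro (fun j => (j == m.+1) || ((j < m.+1) && (G j != j))) m.+1 (introT orP (or_introl (eqxx _)))).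
have jm : j <= m.+1 by apply: jmin; rewrite eqxx.
have Gfix i : i < j -> G i = i.
  move=> ij; have im : i < m.+1 by apply: leq_trans jm.
  apply/eqP; apply: contraTT ij => ne; rewrite -leqNgt; apply: jmin.
  by rewrite ne im orbT.
pose F i := if i <= j then i else G i.-1.
have Flt (i : 'I_m.+2) : F i < n.+1 by rewrite /F; case: ifP => hh; [lia | apply: Glt].
pose H i := if i < j then i else i.+1.
have Hlt (i : 'I_m.+1) : H i < m.+2 by rewrite /H; have := ltn_ord i; case: ifP => _; lia.
exists (fun i => inord (F i)), (fun i => inord (H i)); split.
  move=> a b ab; rewrite !inordK //.
  have bm := ltn_ord b.
  rewrite /F; case: ifP => aj; case: ifP => bj; try lia.
    case: (ltngtP b.-1 j) => c; first lia.
      have := Gge b.-1 ltac:(lia); lia.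
    have : j < m.+1 by lia.
    move: Pj; rewrite -c; case/orP => [/eqP|/andP[_ ne]]; first lia.
    have := Gge b.-1 ltac:(lia); move: ne; rewrite c => /eqP; lia.
  apply: Ginc; lia.
have FH i : i < m.+1 -> F (H i) = G i.
  move=> im; rewrite /F /H; case: (ltnP i j) => ij.
    by rewrite ifT ?Gfix // ltnW.
  by rewrite ifF //; apply/negbTE; rewrite -ltnNge ltnS.
move=> i; apply: val_inj; rewrite /= (inordK (Hlt i)) FH // inordK // Gv.
Qed.
Lemma rank_perm m (x : 'I_m -> nat) : injective x ->
  exists b : 'S_m, forall i j, (b i < b j) = (x i < x j).
Proof.
move=> xinj.
have [r [rlt rmono]] : exists r : 'I_m -> nat, (forall i, r i < m) /\
    (forall i j, x i < x j -> r i < r j).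
  exists (fun i => #|[pred l | x l < x i]|); split.
    move=> i.
    have : #|[pred l | x l < x i]| <= #|predC1 i|.
      apply: subset_leq_card; apply/subsetP => l; rewrite !inE.
      by apply: contraTneq => ->; rewrite ltnn.
    rewrite cardC1 card_ord; move: (#|_|) => ri h; have := ltn_ord i; lia.
  move=> i j lt; apply: proper_card; apply/properP; split.
    by apply/subsetP => l; rewrite !inE => /ltn_trans; apply.
  by exists i; rewrite !inE ?ltnn.
have [R RE] : exists R : 'I_m -> 'I_m, forall i, val (R i) = r i.
  by exists (fun i => Ordinal (rlt i)).
have Riff i j : (R i < R j) = (x i < x j).
  rewrite !RE; case: (ltngtP (x i) (x j)) => [lt|gt|eq].
  - exact: rmono.
  - by apply/negbTE; rewrite -leqNgt ltnW //; apply: rmono.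
  - by rewrite (xinj _ _ eq) ltnn.
have Rinj : injective R.
  move=> i j eq; apply: xinj.
  case: (ltngtP (x i) (x j)) => // h; move: h.
    by rewrite -(Riff i j) eq ltnn.
  by rewrite -(Riff j i) eq ltnn.
by exists (perm Rinj) => i j; rewrite !permE Riff.
Qed.

Lemma containsP n m (s : 'S_n) (t : 'S_m) :
  reflect (exists f : 'I_m -> 'I_n, incr f /\
     forall i j : 'I_m, i < j -> (s (f i) < s (f j)) = (t i < t j)) (contains s t).
Proof.
apply: (iffP existsP) => [[f /andP[/forallP H1 /forallP H2]]|[f [H1 H2]]].
  exists f; split=> i j ij.
    by move/forallP: (H1 i) => /(_ j) /implyP /(_ ij).
  by move/forallP: (H2 i) => /(_ j) /implyP /(_ ij) /eqP.
exists [ffun i : 'I_m => f i]; apply/andP; split; apply/forallP => i; apply/forallP => j;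
  apply/implyP => ij; rewrite !ffunE; first exact: H1.
by rewrite H2.
Qed.

Lemma incr_inj m n (f : 'I_m -> 'I_n) : incr f -> injective f.
Proof.
move=> fi i j eq; case: (ltngtP i j) => [ij|ij|/val_inj //];
  by have := fi _ _ ij; rewrite eq ltnn.
Qed.

Lemma contains_refl n (s : 'S_n) : contains s s.
Proof. by apply/containsP; exists id; split. Qed.

Lemma contains_trans n m k (s : 'S_n) (b : 'S_m) (t : 'S_k) :
  contains s b -> contains b t -> contains s t.
Proof.
move=> /containsP [f [fi fH]] /containsP [h [hi hH]].
apply/containsP; exists (fun i => f (h i)); split.
  by move=> i j ij; apply: fi; apply: hi.
by move=> i j ij; rewrite fH ?hH //; apply: hi.
Qed.

Lemma sandwich n m (s : 'S_n) (a : 'S_m) : contains s a -> m < n ->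
  exists b : 'S_m.+1, contains s b /\ contains b a.
Proof.
move=> /containsP [g [gi gH]] mn.
have [f [h [fi fh]]] := ext1 gi mn.
have xinj : injective (fun i => val (s (f i))).
  by move=> i j /val_inj /perm_inj /(incr_inj fi).
have [b bH] := rank_perm xinj.
exists b; split; apply/containsP.
  by exists f; split => // i j ij; rewrite bH.
have hi : incr h.
  move=> i j ij; have := gi _ _ ij; rewrite -!fh.
  case: (ltngtP (h i) (h j)) => [//|c|/val_inj ->]; last by rewrite ltnn.
  by have := fi _ _ c; move=> c1 c2; have := ltn_trans c1 c2; rewrite ltnn.
exists h; split => // i j ij; by rewrite bH !fh gH.
Qed.

Lemma nu_mem k (T : {set 'S_k}) p (a : 'S_(p + k)) :
  a \in nu_iter p T -> exists2 t, t \in T & contains a t.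
Proof.
elim: p a => [|p IH] a /=.
  by move=> aT; exists a => //; apply: contains_refl.
rewrite /nu => /bigcupP [b bX]; rewrite inE => ab.
have [t tT bt] := IH b bX.
by exists t => //; apply: contains_trans ab bt.
Qed.

Lemma nu_ex k (T : {set 'S_k}) p n (s : 'S_n) (t : 'S_k) :
  t \in T -> contains s t -> p + k <= n -> exists2 a, a \in nu_iter p T & contains s a.
Proof.
move=> tT st; elim: p => [|p IH] pn; first by exists t.
have [a aX sa] := IH (ltnW pn).
have [b [sb ba]] := sandwich sa pn.
by exists b => //=; apply/bigcupP; exists a => //; rewrite inE.
Qed.

Theorem theorem2p8 (k : nat) (T : {set 'S_k}) (p n : nat) :
  1 <= p -> k + p + 1 <= n ->
  Savoid n (nu_iter p T) = Savoid n T.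
Proof.
move=> _ kpn; have pk : p + k <= n by lia.
apply/setP => s; rewrite !inE.
apply/forallP/forallP => H t; apply/implyP => tX; apply/negP => st.
  have [a aX sa] := nu_ex tX st pk.
  by move/implyP: (H a) => /(_ aX) /negP; apply.
have [u uT au] := nu_mem tX.
by move/implyP: (H u) => /(_ uT) /negP; apply; apply: contains_trans st au.
Qed.
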